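(* Let $k$ be a field and let $P=\{0,1,2\}\times\{0,1,2\}$ with the product partial order. Let $M\colon P\to \mathbf{Vect}_k$ be the persistence module with $M_{(0,0)}=0$, $M_{(1,0)}=k$, $M_{(2,0)}=k$, $M_{(0,1)}=k$, $M_{(1,1)}=k^2$, $M_{(2,1)}=k$, $M_{(0,2)}=k$, $M_{(1,2)}=k$, $M_{(2,2)}=0$, whose structure maps between adjacent grid points are: horizontally, $M_{(1,0)}\to M_{(2,0)}$ is the identity, $M_{(0,1)}\to M_{(1,1)}$ is $x\mapsto (x,0)$, $M_{(1,1)}\to M_{(2,1)}$ is $(x,y)\mapsto x+y$, $M_{(0,2)}\to M_{(1,2)}$ is the identity, and all other horizontal maps are $0$; vertically, $M_{(0,1)}\to M_{(0,2)}$ is the identity, $M_{(1,0)}\to M_{(1,1)}$ is $y\mapsto (0,y)$, $M_{(1,1)}\to M_{(1,2)}$ is $(x,y)\mapsto x$, $M_{(2,0)}\to M_{(2,1)}$ is the identity, and all other vertical maps are $0$ (the remaining structure maps are the composites; this diagram commutes). Then $M$ has no good barcode, i.e., there is no multiset $B$ of subsets of $P$ such that for all $x\le y$ in $P$, $\operatorname{rank}(M_{x,y}\colon M_x\to M_y)$ equals the number of elements of $B$ (counted with multiplicity) containing both $x$ and $y$.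
   Context: For a poset $P$, a $P$-persistence module is a functor $M\colon P\to\mathbf{Vect}_k$; $M_{x,y}$ denotes the linear map $M_x\to M_y$ for $x\le y$ (with $M_{x,x}$ the identity). A multiset $B$ of subsets of $P$ is called a good barcode of $M$ if for all $x\le y\in P$, $\operatorname{rank}(M_{x,y})=|\{S\in B : x,y\in S\}|$ (counted with multiplicity). *)

(* Defs.v *)
From HB Require Import structures.
From mathcomp Require Import all_boot all_order all_algebra.
Set Implicit Arguments. Unset Strict Implicit. Unset Printing Implicit Defensive.
Import GRing.Theory.
Local Open Scope ring_scope.

Definition P : finType := ('I_3 * 'I_3)%type.
Definition leP (x y : P) : bool := ((x.1 <= y.1)%N && (x.2 <= y.2)%N).

Definition dimM (i j : nat) : nat :=
  match i, j with
  | 0, 0 => 0 | 1, 0 => 1 | 2, 0 => 1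
  | 0, 1 => 1 | 1, 1 => 2 | 2, 1 => 1
  | 0, 2 => 1 | 1, 2 => 1 | _, _ => 0
  end%N.

(* Matrices act on row vectors: v |-> v *m A. *)
Section Module.
Variable k : fieldType.

Definition e1 : 'M[k]_(1, 2) := \row_(j < 2) (if (j == 0 :> nat) then 1 else 0).
Definition e2 : 'M[k]_(1, 2) := \row_(j < 2) (if (j == 1 :> nat) then 1 else 0).
Definition sum12 : 'M[k]_(2, 1) := \col_(i < 2) 1.
Definition pr1 : 'M[k]_(2, 1) := \col_(i < 2) (if (i == 0 :> nat) then 1 else 0).

Definition hstep (i j : nat) : 'M[k]_(dimM i j, dimM i.+1 j) :=
  match i as i0, j as j0 return 'M[k]_(dimM i0 j0, dimM i0.+1 j0) with
  | 1, 0 => 1%:M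
  | 0, 1 => e1
  | 1, 1 => sum12
  | 0, 2 => 1%:M
  | _, _ => 0%R
  end.

Definition vstep (i j : nat) : 'M[k]_(dimM i j, dimM i j.+1) :=
  match i as i0, j as j0 return 'M[k]_(dimM i0 j0, dimM i0 j0.+1) with
  | 0, 1 => 1%:M
  | 1, 0 => e2
  | 1, 1 => pr1
  | 2, 0 => 1%:M
  | _, _ => 0%R
  end.

(* composite of horizontal steps M_(i1,j) -> M_(i2,j) (meaningful for i1 <= i2;
   for i1 = i2 it is the identity) *)
Fixpoint hpath (j i1 i2 : nat) : 'M[k]_(dimM i1 j, dimM i2 j) :=
  match i2 as i0 return 'M[k]_(dimM i1 j, dimM i0 j) with
  | 0 => conform_mx 0 (1%:M : 'M[k]_(dimM i1 j))
  | i.+1 => if (i1 <= i)%N then hpath j i1 i *m hstep i j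
            else conform_mx 0 (1%:M : 'M[k]_(dimM i1 j))
  end.

Fixpoint vpath (i j1 j2 : nat) : 'M[k]_(dimM i j1, dimM i j2) :=
  match j2 as j0 return 'M[k]_(dimM i j1, dimM i j0) with
  | 0 => conform_mx 0 (1%:M : 'M[k]_(dimM i j1))
  | j.+1 => if (j1 <= j)%N then vpath i j1 j *m vstep i j
            else conform_mx 0 (1%:M : 'M[k]_(dimM i j1))
  end.

(* M_{x,y} for x <= y: composite horizontally then vertically (the diagram commutes). *)
Definition Mmap (x y : P) : 'M[k]_(dimM x.1 x.2, dimM y.1 y.2) :=
  hpath x.2 x.1 y.1 *m vpath y.1 x.2 y.2.

End Module.

Definition good_barcode (k : fieldType) (B : seq {set P}) : Prop :=
  forall x y : P, leP x y ->
    \rank (Mmap k x y) = count (fun S : {set P} => (x \in S) && (y \in S)) B.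

(* Main.v *)
Require Import Defs.
From mathcomp Require Import all_boot all_order all_algebra.
Import GRing.Theory.
Local Open Scope ring_scope.

Definition p10 : P := (@Ordinal 3 1 isT, @Ordinal 3 0 isT).
Definition p01 : P := (@Ordinal 3 0 isT, @Ordinal 3 1 isT).
Definition p21 : P := (@Ordinal 3 2 isT, @Ordinal 3 1 isT).
Definition p12 : P := (@Ordinal 3 1 isT, @Ordinal 3 2 isT).
Ltac simp := rewrite /Mmap /= ?conform_mx_id ?mul1mx ?mulmx1 ?mxrank1.

Lemma ra1 (k : fieldType) : \rank (Mmap k p10 p10) = 1%N. Proof. by simp. Qed.
Lemma ra2 (k : fieldType) : \rank (Mmap k p01 p01) = 1%N. Proof. by simp. Qed.
Lemma ra3 (k : fieldType) : \rank (Mmap k p21 p21) = 1%N. Proof. by simp. Qed.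
Lemma ra4 (k : fieldType) : \rank (Mmap k p10 p21) = 1%N. Proof. by simp. Qed.
Lemma ra5 (k : fieldType) : \rank (Mmap k p01 p21) = 1%N.
Proof.
simp; rewrite rank_rV; case: eqP => // /matrixP /(_ 0 0).
rewrite !mxE !big_ord_recr big_ord0 /= !mxE /= !mul1r !mul0r !add0r !addr0 => /eqP.
by rewrite oner_eq0.
Qed.
Lemma ra6 (k : fieldType) : \rank (Mmap k p10 p12) = 0%N.
Proof.
simp; rewrite rank_rV; case: eqP => // [] []; apply/matrixP => i j.
by rewrite !ord1 !mxE !big_ord_recr big_ord0 /= !mxE /= !mul0r !mulr0 !add0r.
Qed.
Lemma ra7 (k : fieldType) : \rank (Mmap k p01 p12) = 1%N.
Proof.
simp; rewrite rank_rV; case: eqP => // /matrixP /(_ 0 0).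
rewrite !mxE !big_ord_recr big_ord0 /= !mxE /= !mul1r !mul0r !add0r !addr0 => /eqP.
by rewrite oner_eq0.
Qed.

Theorem mainTheorem1 (k : fieldType) : ~ (exists B : seq {set P}, good_barcode k B).
Proof.
move=> [B HB].
have h1 := HB p10 p10 isT; rewrite ra1 in h1.
have h2 := HB p01 p01 isT; rewrite ra2 in h2.
have h3 := HB p21 p21 isT; rewrite ra3 in h3.
have h4 := HB p10 p21 isT; rewrite ra4 in h4.
have h5 := HB p01 p21 isT; rewrite ra5 in h5.
have h6 := HB p10 p12 isT; rewrite ra6 in h6.
have h7 := HB p01 p12 isT; rewrite ra7 in h7.
have cnt : forall (a p : pred {set P}), count a (filter p B) = count (fun S => p S && a S) B.
  by move=> a p; rewrite count_filter; apply: eq_count => S /=; rewrite andbC.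
have : size (filter (fun X : {set P} => p21 \in X) B) = 1%N.
  by rewrite size_filter h3; apply: eq_count => Y; rewrite andbb.
case E: (filter _ B) => [|S [|]] //= _.
have : size (filter (fun X : {set P} => p01 \in X) B) = 1%N.
  by rewrite size_filter h2; apply: eq_count => Y; rewrite andbb.
case F: (filter _ B) => [|T [|]] //= _.
have T21 : p21 \in T.
  move: h5; rewrite -(cnt (fun X => p21 \in X)) F /= addn0.
  by case: (p21 \in T).
have T12 : p12 \in T.
  move: h7; rewrite -(cnt (fun X => p12 \in X)) F /= addn0.
  by case: (p12 \in T).
have TS : T = S.
  have : T \in filter (fun X : {set P} => p21 \in X) B.
    rewrite mem_filter T21 /=; have := mem_head T [::]; rewrite -F mem_filter; by case/andP.
  by rewrite E mem_seq1 => /eqP.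
have : size (filter (fun X : {set P} => p10 \in X) B) = 1%N.
  by rewrite size_filter h1; apply: eq_count => Y; rewrite andbb.
case G: (filter _ B) => [|U [|]] //= _.
have U21 : p21 \in U.
  move: h4; rewrite -(cnt (fun X => p21 \in X)) G /= addn0.
  by case: (p21 \in U).
have US : U = S.
  have : U \in filter (fun X : {set P} => p21 \in X) B.
    rewrite mem_filter U21 /=; have := mem_head U [::]; rewrite -G mem_filter; by case/andP.
  by rewrite E mem_seq1 => /eqP.
by move: h6; rewrite -(cnt (fun X => p12 \in X)) G /= US -TS T12.
Qed.
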